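(* Let $I$ be a $Q$-interval of $\mathcal{P}$ with $D(I)=\{x_1,x_2,\ldots,x_r\}$, listed in the order of the children of the corresponding $Q$-node (so $\max Int(x_i)+1=\min Int(x_{i+1})$). Then $I$ is a $b$-nested common interval if and only if either $Int(x_1)$ is $b$-small and $I\setminus Int(x_1)$ is a $b$-nested common interval, or $Int(x_r)$ is $b$-small and $I\setminus Int(x_r)$ is a $b$-nested common interval.
   Context: Let $n\geq 1$, $K\geq 1$ and let $\mathcal{P}=\{P_1,\ldots,P_K\}$ be permutations of $\{1,\ldots,n\}$ with $P_1=(1,2,\ldots,n)$. For integers $i\leq j$ write $(i..j)=\{i,\ldots,j\}$. A common interval of $\mathcal{P}$ is a set of integers occupying consecutive positions in every $P_k$; all have the form $(i..j)$, and singletons and $(1..n)$ are common. Fix a positive integer $b$. A common interval $I$ is $b$-small if $|I|\leq b$, $b$-large otherwise; it is $b$-nested if $|I|=1$ or $I$ strictly contains a $b$-nested common interval $J$ with $|J|\geq|I|-b$ (recursive on size). Two intervals $(i..j)$, $(k..l)$ overlap if $i<k\leq j<l$ or $k<i\leq l<j$. A common interval is strong if it overlaps no other common interval. The PQ-tree $T$: nodes are the strong common intervals ($Int(x)$ is the interval of node $x$), root $(1..n)$, leaves the singletons, parent of $y$ is the node whose interval is the smallest strong common interval strictly containing $Int(y)$. A node $x$ with children set $D$ is a $P$-node if no union $\bigcup_{z\in D'}Int(z)$, $D'\subset D$, $2\leq|D'|<|D|$, is common; otherwise it is a $Q$-node with children ordered $y_1,\ldots,y_r$ so that $\max Int(y_i)+1=\min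 Int(y_{i+1})$. It is known that a set is a common interval iff it is $Int(x)$ for a node $x$ or the union of the intervals of consecutive children of a unique $Q$-node. The domain $D(I)$ of a common interval $I$ is the set of children of $x$ if $I=Int(x)$ is strong, and otherwise the set of consecutive children of the $Q$-node whose intervals have union $I$. A $P$-interval is a strong common interval $Int(x)$ with $x$ a $P$-node; all other common intervals are $Q$-intervals. *)

(* Defs.v *)
(* Elements and positions are 0-based: {1..n} is modelled by 'I_n. *)
From mathcomp Require Import all_boot all_fingroup.
Set Implicit Arguments. Unset Strict Implicit. Unset Printing Implicit Defensive.

Section CommonIntervals.
Variables (n K : nat) (P : 'I_K -> {perm 'I_n}).
(* P k maps a position to the element at that position; the position of
   element x in P k is (P k)^-1 x. *)

Definition itv (i j : nat) : {set 'I_n} := [set x : 'I_n | i <= x <= j].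

Definition consec (s : {perm 'I_n}) (S : {set 'I_n}) : bool :=
  (S != set0) &&
  [forall x in S, forall y in S, forall z : 'I_n,
     (((s^-1)%g x <= (s^-1)%g z) && ((s^-1)%g z <= (s^-1)%g y))%N ==> (z \in S)].

Definition common (S : {set 'I_n}) : bool := [forall k, consec (P k) S].

Definition overlap (S T : {set 'I_n}) : bool :=
  [exists i : 'I_n, exists j : 'I_n, exists k : 'I_n, exists l : 'I_n,
     (S == itv i j) && (T == itv k l) &&
     (((i < k) && (k <= j) && (j < l)) || ((k < i) && (i <= l) && (l < j)))%N].

Definition strong (S : {set 'I_n}) : bool :=
  common S && [forall T, common T ==> ~~ overlap S T].

(* Y is a child of X in the PQ-tree: X is the smallest strong common
   interval strictly containing Y *)
Definition is_child (X Y : {set 'I_n}) : bool :=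
  strong X && strong Y && (Y \proper X) &&
  [forall Z, (strong Z && (Y \proper Z)) ==> (X \subset Z)].

Definition children (X : {set 'I_n}) : {set {set 'I_n}} := [set Y | is_child X Y].

Definition some_union_common (X : {set 'I_n}) : bool :=
  [exists D' : {set {set 'I_n}},
     [&& D' \subset children X, 2 <= #|D'|, #|D'| < #|children X| &
         common (\bigcup_(Y in D') Y)]].

Definition Pnode (X : {set 'I_n}) : bool := strong X && ~~ some_union_common X.
Definition Qnode (X : {set 'I_n}) : bool := strong X && some_union_common X.

Definition Pinterval (I : {set 'I_n}) : bool := Pnode I.
Definition Qinterval (I : {set 'I_n}) : bool := common I && ~~ Pinterval I.

Definition adj (Y Z : {set 'I_n}) : bool :=
  [exists y in Y, exists z in Z,
     [&& (val y).+1 == val z, [forall y' in Y, y' <= y] & [forall z' in Z, z <= z']]].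

Definition is_domain (I : {set 'I_n}) (D : {set {set 'I_n}}) : Prop :=
  (strong I /\ D = children I) \/
  (~~ strong I /\ exists X, Qnode X /\
     exists cs : seq {set 'I_n},
       sorted adj cs /\ perm_eq cs (enum (children X)) /\
       exists a m : nat, D = [set Y in take m (drop a cs)] /\
                         \bigcup_(Y in D) Y = I).

Definition small (b : nat) (I : {set 'I_n}) : bool := #|I| <= b.

(* b-nested common intervals (least fixed point = recursion on size) *)
Inductive nested (b : nat) : {set 'I_n} -> Prop :=
| nested1 I : common I -> #|I| = 1 -> nested b I
| nestedS I J : common I -> common J -> J \proper I -> #|I| <= #|J| + b ->
                nested b J -> nested b I.

End CommonIntervals.

(* Main.v *)
Require Import Defs.
From mathcomp Require Import all_boot all_fingroup.
From mathcomp Require Import zify.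
Set Implicit Arguments. Unset Strict Implicit. Unset Printing Implicit Defensive.

Section Abstract.
Variables (r : nat) (F : nat -> nat -> bool).
Hypothesis F1 : forall i, i < r -> F i i.
Hypothesis F2 : F 0 (r.-1).
Hypothesis F3 : forall i j k l, i < k -> k <= j -> j < l -> l < r -> F i j -> F k l ->
  [/\ F k j, F i k.-1, F j.+1 l & F i l].
Hypothesis F4 : forall i j, i < j -> j < r -> ~ (i = 0 /\ j = r.-1) -> F i j ->
  exists k l, [/\ k <= l, l < r, F k l &
     ((i < k /\ k <= j /\ j < l) \/ (k < i /\ i <= l /\ l < j))].
Hypothesis F5 : exists i j, [/\ i < j, j < r, ~ (i = 0 /\ j = r.-1) & F i j].

Ltac slia := repeat match goal with
  | H : is_true (F _ _) |- _ => clear H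
  | H : is_true (~~ F _ _) |- _ => clear H
  | H : forall _, _ |- _ => clear H
  | H : ~ (_ = 0 /\ _) |- _ => clear H
  end; lia.

Lemma abs_pair i : i.+1 < r -> F i i.+1.
Proof.
move=> ir; apply/negPn/negP => Fmiss.
suff: forall d a, a <= i -> i < a + d -> a + d < r -> F a (a + d) -> False.
  by move/(_ (r.-1) 0); apply => //; try slia; rewrite add0n.
elim/ltn_ind => d IH a ai ib br Fab.
have shorter : forall a' b', a' <= i -> i < b' -> b' < r -> F a' b' -> b' - a' < d -> False.
  move=> a' b' h1 h2 h3 h4 h5; apply: (IH (b' - a') h5 a') => //; try slia.
  by rewrite subnKC //; slia.
move Eb: (a + d) => b in ib br Fab.
have [full|nfull] := boolP ((a == 0) && (b == r.-1)).
-
  have ncross : forall p q, q < r -> F p q -> ~ (p = 0 /\ q = r.-1) -> ~ (p <= i /\ i < q).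
    move=> p q qr Fpq nf [h1 h2]; apply: (shorter p q) => //; lia.
  suff: forall c p q, q - p + c = r.-1 -> p < q -> q < r -> F p q -> ~ (p <= i /\ i < q) -> False.
    case: F5 => p [q [h1 h2 h3 h4]].
    move/(_ (r.-1 - (q - p)) p q); apply => //; try lia.
    by apply: ncross.
  elim/ltn_ind => c IHc p q hc pq qr Fpq nc.
  have nf : ~ (p = 0 /\ q = r.-1) by lia.
  case: (F4 pq qr nf Fpq) => k [l [kl lr Fkl [[h1 [h2 h3]]|[h1 [h2 h3]]]]].
  + case: (F3 h1 h2 h3 lr Fpq Fkl) => _ _ _ Fpl.
    have nkl : ~ (k <= i /\ i < l) by apply: ncross => //; lia.
    apply: (IHc (r.-1 - (l - p)) _ p l) => //; lia.
  + case: (F3 h1 h2 h3 qr Fkl Fpq) => _ _ _ Fkq.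
    have nkl : ~ (k <= i /\ i < l) by apply: ncross => //; lia.
    apply: (IHc (r.-1 - (q - k)) _ k q) => //; lia.
- have nf : ~ (a = 0 /\ b = r.-1) by case=> h1 h2; move/negP: nfull; apply; apply/andP; split; apply/eqP.
  clear nfull.
  have ab : a < b by slia.
  have notpair : ~ (a = i /\ b = i.+1).
    by case=> h1 h2; move: Fab; rewrite h1 h2; apply/negP.
  case: (F4 ab br nf Fab) => k [l [kl lr Fkl [[h1 [h2 h3]]|[h1 [h2 h3]]]]]; clear nf.
  + case: (F3 h1 h2 h3 lr Fab Fkl) => Fkb Fak Fbl Fal.
    have [ki|ik] := leqP k i; first by apply: (shorter k b) => //; slia.
    have [ki2|ik2] := leqP k i.+1; last by apply: (shorter a k.-1) => //; slia.
    have ek : k = i.+1 by slia.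
    rewrite ek in Fkb Fak.
    have [bi|ib2] := leqP b i.+1.
    * have ai2 : a < i by slia.
      have nfl : ~ (a = 0 /\ i.+1.-1 = r.-1) by slia.
      case: (F4 (i:=a) (j:=i.+1.-1) ltac:(slia) ltac:(slia) nfl Fak) =>
        u [w [uw wr Fuw [[g1 [g2 g3]]|[g1 [g2 g3]]]]]; clear nfl.
      -- have [wb|wb] := leqP w b; first by apply: (shorter u w) => //; slia.
         case: (F3 (i:=a) (j:=b) (k:=u) (l:=w) ltac:(slia) ltac:(slia) wb wr Fab Fuw) => Fub _ _ _.
         by apply: (shorter u b) => //; slia.
      -- case: (F3 (i:=u) (j:=w) (k:=a) (l:=b) g1 g2 ltac:(slia) br Fuw Fab) => _ _ Fwb _.
         by apply: (shorter w.+1 b) => //; slia.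
    * have nfr : ~ (i.+1 = 0 /\ b = r.-1) by slia.
      case: (F4 (i:=i.+1) (j:=b) ib2 br nfr Fkb) =>
        u [w [uw wr Fuw [[g1 [g2 g3]]|[g1 [g2 g3]]]]]; clear nfr.
      -- case: (F3 (i:=a) (j:=b) (k:=u) (l:=w) ltac:(slia) g2 g3 wr Fab Fuw) => _ Fau _ _.
         by apply: (shorter a u.-1) => //; slia.
      -- have [au|ua] := leqP a u; first by apply: (shorter u w) => //; slia.
         case: (F3 (i:=u) (j:=w) (k:=a) (l:=b) ua ltac:(slia) g3 br Fuw Fab) => Faw _ _ _.
         by apply: (shorter a w) => //; slia.
  + case: (F3 h1 h2 h3 br Fkl Fab) => Fal Fka Flb Fkb.
    have [il|li] := leqP i.+1 l; first by apply: (shorter a l) => //; slia.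
    have [li2|il2] := leqP i l; last by apply: (shorter l.+1 b) => //; slia.
    have el : l = i by slia.
    rewrite el in Fal Flb.
    have [ai2|ia] := ltnP a i.
    * have nfl : ~ (a = 0 /\ i = r.-1) by slia.
      case: (F4 (i:=a) (j:=i) ai2 ltac:(slia) nfl Fal) =>
        u [w [uw wr Fuw [[g1 [g2 g3]]|[g1 [g2 g3]]]]]; clear nfl.
      -- have [wb|wb] := leqP w b; first by apply: (shorter u w) => //; slia.
         case: (F3 (i:=a) (j:=b) (k:=u) (l:=w) ltac:(slia) ltac:(slia) wb wr Fab Fuw) => Fub _ _ _.
         by apply: (shorter u b) => //; slia.
      -- case: (F3 (i:=u) (j:=w) (k:=a) (l:=b) g1 g2 ltac:(slia) br Fuw Fab) => _ _ Fwb _.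
         by apply: (shorter w.+1 b) => //; slia.
    * have ib2 : i.+1 < b by slia.
      have nfr : ~ (i.+1 = 0 /\ b = r.-1) by slia.
      case: (F4 (i:=i.+1) (j:=b) ib2 br nfr Flb) =>
        u [w [uw wr Fuw [[g1 [g2 g3]]|[g1 [g2 g3]]]]]; clear nfr.
      -- case: (F3 (i:=a) (j:=b) (k:=u) (l:=w) ltac:(slia) g2 g3 wr Fab Fuw) => _ Fau _ _.
         by apply: (shorter a u.-1) => //; slia.
      -- have [au|ua] := leqP a u; first by apply: (shorter u w) => //; slia.
         case: (F3 (i:=u) (j:=w) (k:=a) (l:=b) ua ltac:(slia) g3 br Fuw Fab) => Faw _ _ _.
         by apply: (shorter a w) => //; slia.
Qed.

Lemma abs_all i j : i <= j -> j < r -> F i j.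
Proof.
move=> ij jr.
have : forall d, i + d < r -> F i (i + d).
  elim=> [|d IH] h; first by rewrite addn0; apply: F1; lia.
  have Fp : F (i + d) (i + d).+1 by apply: abs_pair; lia.
  rewrite addnS.
  case: d IH h Fp => [|d] IH h Fp; first by rewrite addn0 in Fp *.
  have Fi : F i (i + d.+1) by apply: IH; lia.
  by case: (F3 (i:=i) (j:=i+d.+1) (k:=i+d.+1) (l:=(i+d.+1).+1) ltac:(lia) (leqnn _) (ltnSn _) ltac:(lia) Fi Fp).
by move/(_ (j - i)); rewrite subnKC //; apply.
Qed.
End Abstract.

Section Basic.
Variables (n K : nat) (P : 'I_K -> {perm 'I_n}).
Hypothesis hK : 0 < K.
Hypothesis hP1 : forall k : 'I_K, val k = 0 -> P k = 1%g.

Lemma consecP (s : {perm 'I_n}) S : consec s S ->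
  forall x y z, x \in S -> y \in S ->
  ((s^-1)%g x <= (s^-1)%g z)%N -> ((s^-1)%g z <= (s^-1)%g y)%N -> z \in S.
Proof.
case/andP=> _ /forall_inP H x y z xS yS h1 h2.
by move: (H x xS) => /forall_inP /(_ y yS) /forallP /(_ z) /implyP; apply; rewrite h1 h2.
Qed.

Lemma consecI (s : {perm 'I_n}) S :
  S != set0 ->
  (forall x y z, x \in S -> y \in S ->
    ((s^-1)%g x <= (s^-1)%g z)%N -> ((s^-1)%g z <= (s^-1)%g y)%N -> z \in S) ->
  consec s S.
Proof.
move=> ne H; apply/andP; split => //.
apply/forall_inP => x xS; apply/forall_inP => y yS; apply/forallP => z.
by apply/implyP => /andP [h1 h2]; apply: (H x y).
Qed.

Lemma consec_ne (s : {perm 'I_n}) (S : {set 'I_n}) : consec s S -> S != set0.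
Proof. by case/andP. Qed.

Lemma consec_cap (s : {perm 'I_n}) A B : consec s A -> consec s B -> A :&: B != set0 ->
  consec s (A :&: B).
Proof.
move=> cA cB ne; apply: consecI => // x y z; rewrite !inE => /andP[xA xB] /andP[yA yB] h1 h2.
by rewrite (consecP cA xA yA h1 h2) (consecP cB xB yB h1 h2).
Qed.

Lemma cup_key (s : {perm 'I_n}) A B w : consec s A -> consec s B -> w \in A -> w \in B ->
  forall x y z, x \in A -> y \in B ->
   ((s^-1)%g x <= (s^-1)%g z)%N -> ((s^-1)%g z <= (s^-1)%g y)%N -> z \in A :|: B.
Proof.
move=> cA cB wA wB x y z xA yB h1 h2; rewrite inE.
have [hz|hz] := leqP ((s^-1)%g z) ((s^-1)%g w).
- by rewrite (consecP cA xA wA h1 hz).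
- by rewrite (consecP cB wB yB (ltnW hz) h2) orbT.
Qed.

Lemma consec_cup (s : {perm 'I_n}) A B : consec s A -> consec s B -> A :&: B != set0 ->
  consec s (A :|: B).
Proof.
move=> cA cB ne; apply: consecI.
  case/set0Pn: ne => w; rewrite inE => /andP [wA _]; apply/set0Pn; exists w; by rewrite inE wA.
case/set0Pn: ne => w; rewrite inE => /andP [wA wB].
move=> x y z; rewrite !inE => /orP [xA|xB] /orP [yA|yB] h1 h2.
- by rewrite (consecP cA xA yA h1 h2).
- by move: (cup_key cA cB wA wB xA yB h1 h2); rewrite inE.
- by move: (cup_key cB cA wB wA xB yA h1 h2); rewrite inE orbC.
- by rewrite (consecP cB xB yB h1 h2) orbT.
Qed.

Lemma consec_diff (s : {perm 'I_n}) A B : consec s A -> consec s B ->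
  ~~ (A \subset B) -> ~~ (B \subset A) -> consec s (A :\: B).
Proof.
move=> cA cB nAB nBA; apply: consecI.
  by apply: contraNneq nAB => /eqP; rewrite setD_eq0.
case/subsetPn: nBA => v vB vA.
move=> x y z; rewrite !inE => /andP[xB xA] /andP[yB yA] h1 h2.
rewrite (consecP cA xA yA h1 h2) andbT; apply/negP => zB.
have [hv|hv] := leqP ((s^-1)%g v) ((s^-1)%g x).
- have [hv2|hv2] := leqP ((s^-1)%g v) ((s^-1)%g y).
  + by move: (consecP cB vB zB hv h1); rewrite (negbTE xB).
  + by move: (consecP cB vB zB hv h1); rewrite (negbTE xB).
- have [hv2|hv2] := leqP ((s^-1)%g y) ((s^-1)%g v).
  + by move: (consecP cB zB vB h2 hv2); rewrite (negbTE yB).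
  + have : v \in A by apply: (consecP cA xA yA (ltnW hv) (ltnW hv2)).
    by rewrite (negbTE vA).
Qed.

Definition k0 : 'I_K := Ordinal hK.

Lemma common_consec S k : common P S -> consec (P k) S.
Proof. by move/forallP. Qed.

Lemma common_ne S : common P S -> S != set0.
Proof. by move/(common_consec k0)/consec_ne. Qed.

Lemma common_int S (x y z : 'I_n) : common P S -> x \in S -> y \in S ->
  (x <= z)%N -> (z <= y)%N -> z \in S.
Proof.
move/(common_consec k0); rewrite hP1 // => cS xS yS h1 h2.
by apply: (consecP cS xS yS); rewrite invg1 !perm1.
Qed.

Lemma commonI A B : common P A -> common P B -> A :&: B != set0 -> common P (A :&: B).
Proof. by move=> cA cB ne; apply/forallP => k; apply: consec_cap => //; apply: common_consec. Qed.
Lemma commonU A B : common P A -> common P B -> A :&: B != set0 -> common P (A :|: B).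
Proof. by move=> cA cB ne; apply/forallP => k; apply: consec_cup => //; apply: common_consec. Qed.
Lemma commonD A B : common P A -> common P B -> ~~ (A \subset B) -> ~~ (B \subset A) ->
  common P (A :\: B).
Proof. by move=> cA cB h1 h2; apply/forallP => k; apply: consec_diff => //; apply: common_consec. Qed.


Lemma ex_min_max (S : {set 'I_n}) : S != set0 ->
  exists i j : 'I_n, [/\ i \in S, j \in S, (forall x, x \in S -> i <= x)%N &
     (forall x, x \in S -> x <= j)%N].
Proof.
case/set0Pn=> w wS.
case: (@arg_minnP _ w (fun x => x \in S) (fun x => val x) wS) => i iS imin.
case: (@arg_maxnP _ w (fun x => x \in S) (fun x => val x) wS) => j jS jmax.
by exists i, j; split.
Qed.

Lemma common_itv S : common P S ->
  exists i j : 'I_n, [/\ S = itv n i j, i \in S, j \in S & (i <= j)%N].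
Proof.
move=> cS; case: (ex_min_max (common_ne cS)) => i [j [iS jS imin jmax]].
exists i, j; split => //; last exact: imin.
apply/setP => x; rewrite inE; apply/idP/idP.
- by move=> xS; rewrite imin // jmax.
- by case/andP => h1 h2; apply: (common_int cS iS jS).
Qed.

Lemma overlap_of S T : common P S -> common P T -> S :&: T != set0 ->
  ~~ (S \subset T) -> ~~ (T \subset S) -> overlap S T.
Proof.
move=> cS cT ne nST nTS.
case: (common_itv cS) => i [j [eS iS jS ij]].
case: (common_itv cT) => k [l [eT kT lT kl]].
case/set0Pn: ne => x; rewrite inE => /andP [xS xT].
case/subsetPn: nST => y yS yT.
case/subsetPn: nTS => z zT zS.
move: xS xT yS yT zS zT; rewrite eS eT !inE => xS xT yS yT zS zT.
apply/existsP; exists i; apply/existsP; exists j; apply/existsP; exists k;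
apply/existsP; exists l; rewrite !eqxx /=.
lia.
Qed.

Lemma overlap_facts (S T : {set 'I_n}) : overlap S T ->
  [/\ S :&: T != set0, ~~ (S \subset T) & ~~ (T \subset S)].
Proof.
case/existsP => i /existsP [j /existsP [k /existsP [l]]].
case/andP => /andP [/eqP -> /eqP ->] H.
case/orP: H => /andP [/andP [h1 h2] h3].
- split.
  + by apply/set0Pn; exists k; rewrite !inE; lia.
  + by apply/subsetPn; exists i; rewrite !inE; lia.
  + by apply/subsetPn; exists l; rewrite !inE; lia.
- split.
  + by apply/set0Pn; exists i; rewrite !inE; lia.
  + by apply/subsetPn; exists j; rewrite !inE; lia.
  + by apply/subsetPn; exists k; rewrite !inE; lia.
Qed.

Lemma strong_common S : strong P S -> common P S.
Proof. by case/andP. Qed.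

Lemma strong_no_overlap S T : strong P S -> common P T -> ~~ overlap S T.
Proof. by case/andP => _ /forallP /(_ T) /implyP; apply. Qed.

Lemma laminar S T : strong P S -> common P T -> S :&: T != set0 ->
  (S \subset T) \/ (T \subset S).
Proof.
move=> sS cT ne.
have [h1|h1] := boolP (S \subset T); first by left.
have [h2|h2] := boolP (T \subset S); first by right.
by move: (strong_no_overlap sS cT); rewrite overlap_of // strong_common.
Qed.

Lemma single_strong (x : 'I_n) : strong P [set x].
Proof.
apply/andP; split.
  apply/forallP => k; apply: consecI; first by apply/set0Pn; exists x; rewrite inE.
  move=> y z w; rewrite !inE => /eqP -> /eqP -> h1 h2.
  apply/eqP; apply: (@perm_inj _ ((P k)^-1)%g); apply: val_inj; apply/eqP.
  by rewrite eqn_leq h1 h2.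
apply/forallP => T; apply/implyP => _.
apply/negP => /existsP [i /existsP [j /existsP [k /existsP [l]]]].
case/andP => /andP [/eqP E _] H.
have xi : x \in itv n i j by rewrite -E inE.
move: xi; rewrite inE => /andP [h1 h2].
have : (i : 'I_n) \in itv n i j by rewrite inE leqnn /=; lia.
have : (j : 'I_n) \in itv n i j by rewrite inE leqnn /=; lia.
rewrite -E !inE => /eqP ej /eqP ei.
move: H; rewrite ei ej; lia.
Qed.

Lemma nested_common b S : nested P b S -> common P S.
Proof. by case. Qed.

Lemma childP X Y : is_child P X Y ->
  [/\ strong P X, strong P Y, Y \proper X &
      forall Z, strong P Z -> Y \proper Z -> X \subset Z].
Proof.
case/andP => /andP [/andP [sX sY] pYX] /forallP H; split => // Z sZ pYZ.
by move: (H Z) => /implyP; apply; rewrite sZ pYZ.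
Qed.

Lemma child_disj X Y1 Y2 : is_child P X Y1 -> is_child P X Y2 -> Y1 :&: Y2 != set0 -> Y1 = Y2.
Proof.
move=> c1 c2 ne.
case: (childP c1) => _ s1 p1 m1; case: (childP c2) => _ s2 p2 m2.
have sub : forall A B, is_child P X A -> strong P B -> B \proper X -> A \subset B -> A = B.
  move=> A B cA sB pB AB; case: (childP cA) => _ _ _ mA.
  apply/eqP; rewrite eqEsubset AB /=; apply/negPn/negP => nBA.
  have pAB : A \proper B by rewrite properE AB nBA.
  by move: (mA B sB pAB); move: pB; rewrite properE => /andP [_ /negP].
case: (laminar s1 (strong_common s2) ne) => h.
- exact: sub.
- by apply/esym; apply: sub.
Qed.

Lemma child_ne X Y : is_child P X Y -> Y != set0.
Proof. by case/childP => _ /strong_common/common_ne. Qed.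

Lemma child_sub X Y : is_child P X Y -> Y \subset X.
Proof. by case/childP => _ _ /proper_sub. Qed.

Lemma child_cover X (x : 'I_n) : children P X != set0 -> x \in X ->
  exists Y, is_child P X Y /\ x \in Y.
Proof.
case/set0Pn => C; rewrite inE => cC xX.
case: (childP cC) => sX sC pCX _.
have pxX : [set x] \proper X.
  rewrite properEneq sub1set xX andbT; apply/eqP => ex.
  move: pCX; rewrite -ex => pC.
  have : C != set0 by apply: child_ne cC.
  case/set0Pn => y yC.
  have : y \in [set x] by apply: (subsetP (proper_sub pC)).
  rewrite inE => /eqP ey; move: yC; rewrite ey => xC.
  move: pC; rewrite properE => /andP [_ /negP]; apply.
  by rewrite sub1set.
have P0 : strong P [set x] && (x \in [set x]) && ([set x] \proper X).
  by rewrite single_strong set11 pxX.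
case: (@arg_maxnP _ [set x] (fun S => strong P S && (x \in S) && (S \proper X)) (fun S => #|S|) P0)
  => M /andP [/andP [sM xM] pMX] Mmax.
exists M; split => //.
apply/andP; split; first by rewrite sX sM pMX.
apply/forallP => Z; apply/implyP => /andP [sZ pMZ].
have ne : X :&: Z != set0.
  by apply/set0Pn; exists x; rewrite inE xX (subsetP (proper_sub pMZ)).
case: (laminar sX (strong_common sZ) ne) => // ZX.
have [eZ|nZ] := eqVneq Z X; first by rewrite eZ.
have pZX : Z \proper X by rewrite properEneq nZ ZX.
have : #|Z| <= #|M|.
  by apply: (Mmax Z); rewrite sZ pZX (subsetP (proper_sub pMZ)).
by rewrite leqNgt proper_card.
Qed.

Definition ltset (Y Z : {set 'I_n}) : bool := [forall y in Y, forall z in Z, y < z].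
Definition Rset (Y Z : {set 'I_n}) : bool := [&& Y != set0, Z != set0 & ltset Y Z].

Lemma adj_R : subrel (@adj n) Rset.
Proof.
move=> Y Z /existsP [y /andP [yY /existsP [z /andP [zZ /and3P [/eqP e /forall_inP hY /forall_inP hZ]]]]].
apply/and3P; split; try (apply/set0Pn; by eexists; eauto).
apply/forall_inP => y' y'Y; apply/forall_inP => z' z'Z.
have e' : (y : nat).+1 = z by exact: e.
move: (hY y' y'Y) (hZ z' z'Z); lia.
Qed.

Lemma R_trans : transitive Rset.
Proof.
move=> M A C /and3P [nA nM /forall_inP h1] /and3P [_ nC /forall_inP h2].
apply/and3P; split => //.
case/set0Pn: nM => m mM.
apply/forall_inP => a aA; apply/forall_inP => c cC.
move: (h1 a aA) => /forall_inP /(_ m mM) H1; move: (h2 m mM) => /forall_inP /(_ c cC) H2.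
exact: ltn_trans H1 H2.
Qed.

Lemma R_irr : irreflexive Rset.
Proof.
move=> Y; apply/negP => /and3P [/set0Pn [y yY] _ /forall_inP /(_ y yY) /forall_inP /(_ y yY)].
by rewrite ltnn.
Qed.

Lemma sorted_adj_R s : sorted (@adj n) s -> sorted Rset s.
Proof. by apply: sub_sorted; exact: adj_R. Qed.

Lemma sorted_adj_uniq s : sorted (@adj n) s -> uniq s.
Proof. by move/sorted_adj_R; apply: (sorted_uniq R_trans R_irr). Qed.

Lemma sorted_adj_lt s i j (y z : 'I_n) : sorted (@adj n) s -> i < j -> j < size s ->
  y \in nth set0 s i -> z \in nth set0 s j -> y < z.
Proof.
move=> /sorted_adj_R; rewrite sorted_pairwise; last exact: R_trans.
move/(pairwiseP set0) => H ij js yi zj.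
have : Rset (nth set0 s i) (nth set0 s j) by apply: H => //; rewrite inE; lia.
by case/and3P => _ _ /forall_inP /(_ y yi) /forall_inP /(_ z zj).
Qed.


Section Node.
Variables (X : {set 'I_n}) (cs : seq {set 'I_n}).
Hypothesis hQ : Qnode P X.
Hypothesis hsort : sorted (@adj n) cs.
Hypothesis hmem : forall Y, (Y \in cs) = is_child P X Y.

Local Notation r := (size cs).
Local Notation c m := (nth set0 cs m).

Lemma sX : strong P X.
Proof. by case/andP: hQ. Qed.

Lemma cs_uniq : uniq cs.
Proof. exact: sorted_adj_uniq. Qed.

Lemma card_children : #|children P X| = r.
Proof.
rewrite -(card_uniqP cs_uniq); apply: eq_card => Y.
by rewrite inE hmem.
Qed.

Lemma some_union : some_union_common P X.
Proof. by case/andP: hQ. Qed.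

Lemma r_ge3 : 2 < r.
Proof.
case/existsP: some_union => D' /and4P [_ h2 h3 _].
rewrite -card_children; exact: leq_ltn_trans h2 h3.
Qed.

Lemma children_ne : children P X != set0.
Proof.
apply/set0Pn; exists (c 0); rewrite inE -hmem; apply: mem_nth.
by move: r_ge3; apply: leq_ltn_trans.
Qed.

Lemma c_child m : m < r -> is_child P X (c m).
Proof. by move=> mr; rewrite -hmem; apply: mem_nth. Qed.

Lemma c_ne m : m < r -> c m != set0.
Proof. by move/c_child/child_ne. Qed.

Lemma c_sub m : m < r -> c m \subset X.
Proof. by move/c_child/child_sub. Qed.

Lemma c_strong m : m < r -> strong P (c m).
Proof. by case/c_child/childP. Qed.

Lemma c_lt i j (y z : 'I_n) : i < j -> j < r -> y \in c i -> z \in c j -> y < z.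
Proof. exact: sorted_adj_lt. Qed.

Definition idx (y : 'I_n) := find (fun Y : {set 'I_n} => y \in Y) cs.

Lemma idx_lt y : y \in X -> idx y < r.
Proof.
move=> yX; case: (child_cover children_ne yX) => Y [cY yY].
rewrite /idx -has_find; apply/hasP; exists Y => //; by rewrite hmem.
Qed.

Lemma idx_in y : y \in X -> y \in c (idx y).
Proof.
move=> yX; have := idx_lt yX; rewrite /idx -has_find => H.
exact: (nth_find set0 H).
Qed.

Lemma idx_eq y m : m < r -> y \in c m -> idx y = m.
Proof.
move=> mr ym.
have yX : y \in X by apply: (subsetP (c_sub mr)).
have tr := idx_lt yX; have yt := idx_in yX.
have : c (idx y) = c m.
  apply: (child_disj (c_child tr) (c_child mr)).
  by apply/set0Pn; exists y; rewrite inE yt ym.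
by move/eqP; rewrite nth_uniq ?cs_uniq // => /eqP.
Qed.

Lemma idx_mono y z : y \in X -> z \in X -> idx y < idx z -> y < z.
Proof.
move=> yX zX lt; apply: (c_lt lt (idx_lt zX)); exact: idx_in.
Qed.

Lemma idx_le (y z : 'I_n) : y \in X -> z \in X -> y <= z -> idx y <= idx z.
Proof.
move=> yX zX yz; rewrite leqNgt; apply/negP => /(idx_mono zX yX); lia.
Qed.

Definition blk i j := [set y in X | (i <= idx y) && (idx y <= j)].

Lemma mem_blk i j y : (y \in blk i j) = [&& y \in X, i <= idx y & idx y <= j].
Proof. by rewrite inE. Qed.

Lemma blk_subX i j : blk i j \subset X.
Proof. by apply/subsetP => y; rewrite mem_blk => /andP []. Qed.

Lemma c_blk m i j y : m < r -> y \in c m -> (y \in blk i j) = (i <= m <= j).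
Proof.
move=> mr ym; rewrite mem_blk (idx_eq mr ym) (subsetP (c_sub mr)) //.
Qed.

Lemma blk_fill T i j : common P T -> i <= j -> j < r -> c i \subset T -> c j \subset T ->
  blk i j \subset T.
Proof.
move=> cT ij jr ciT cjT; apply/subsetP => y; rewrite mem_blk => /and3P [yX h1 h2].
have [ei|ni] := eqVneq (idx y) i; first by rewrite -ei in ciT; apply: (subsetP ciT); exact: idx_in.
have [ej|nj] := eqVneq (idx y) j; first by rewrite -ej in cjT; apply: (subsetP cjT); exact: idx_in.
case/set0Pn: (c_ne (leq_ltn_trans ij jr)) => yi yiC.
case/set0Pn: (c_ne jr) => yj yjC.
have l1 : yi < y.
  apply: (idx_mono (subsetP (c_sub (leq_ltn_trans ij jr)) _ yiC) yX).
  rewrite (idx_eq (leq_ltn_trans ij jr) yiC); lia.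
have l2 : y < yj.
  apply: (idx_mono yX (subsetP (c_sub jr) _ yjC)).
  rewrite (idx_eq jr yjC); lia.
apply: (common_int cT (subsetP ciT _ yiC) (subsetP cjT _ yjC)); lia.
Qed.

Lemma blk_ne i j : i <= j -> j < r -> blk i j != set0.
Proof.
move=> ij jr; case/set0Pn: (c_ne (leq_ltn_trans ij jr)) => y yC.
by apply/set0Pn; exists y; rewrite (c_blk _ _ (leq_ltn_trans ij jr) yC) leqnn ij.
Qed.

Lemma blk_sub_iff i j k l : i <= j -> j < r -> k <= l -> l < r ->
  (blk i j \subset blk k l) = (k <= i) && (j <= l).
Proof.
move=> ij jr kl lr; apply/idP/idP.
- move/subsetP => H.
  case/set0Pn: (c_ne (leq_ltn_trans ij jr)) => y yC.
  case/set0Pn: (c_ne jr) => z zC.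
  have := H y; rewrite (c_blk _ _ (leq_ltn_trans ij jr) yC) (c_blk _ _ (leq_ltn_trans ij jr) yC) leqnn ij => /(_ isT) /andP [h1 _].
  have := H z; rewrite (c_blk _ _ jr zC) (c_blk _ _ jr zC) leqnn ij => /(_ isT) /andP [_ h2].
  by rewrite h1 h2.
- move=> /andP [h1 h2]; apply/subsetP => y; rewrite !mem_blk => /and3P [-> h3 h4] /=.
  apply/andP; split; lia.
Qed.

Lemma blk_meet i j k l : i <= j -> j < r -> k <= l -> l < r ->
  (blk i j :&: blk k l != set0) = (k <= j) && (i <= l).
Proof.
move=> ij jr kl lr; apply/idP/idP.
- case/set0Pn => y; rewrite inE !mem_blk => /andP [/and3P [_ h1 h2] /and3P [_ h3 h4]].
  apply/andP; split; lia.
- move=> /andP [h1 h2].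
  have mr : maxn i k < r by lia.
  case/set0Pn: (c_ne mr) => y yC.
  apply/set0Pn; exists y; rewrite inE (c_blk _ _ mr yC) (c_blk _ _ mr yC).
  apply/andP; split; lia.
Qed.

Lemma blk_single i : i < r -> blk i i = c i.
Proof.
move=> ir; apply/setP => y; apply/idP/idP.
- rewrite mem_blk => /and3P [yX h1 h2].
  have -> : i = idx y by lia.
  exact: idx_in.
- by move=> yC; rewrite (c_blk _ _ ir yC) leqnn.
Qed.

Lemma blk_full : blk 0 r.-1 = X.
Proof.
apply/setP => y; rewrite mem_blk; apply/idP/idP; first by case/andP.
move=> yX; rewrite yX /=; move: (idx_lt yX); lia.
Qed.

Lemma shape T : common P T -> T \subset X ->
  (forall m, m < r -> c m :&: T != set0 -> c m \subset T) ->
  exists k l, [/\ k <= l, l < r & T = blk k l].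
Proof.
move=> cT TX H.
case: (ex_min_max (common_ne cT)) => i0 [j0 [i0T j0T imin jmax]].
have i0X := subsetP TX _ i0T; have j0X := subsetP TX _ j0T.
exists (idx i0), (idx j0); split; first by apply: idx_le => //; apply: imin.
- exact: idx_lt.
apply/eqP; rewrite eqEsubset; apply/andP; split.
- apply/subsetP => y yT; have yX := subsetP TX _ yT.
  by rewrite mem_blk yX !idx_le // ?imin ?jmax.
- apply: blk_fill => //; first by apply: idx_le => //; apply: imin.
  + exact: idx_lt.
  + apply: H; first exact: idx_lt.
    by apply/set0Pn; exists i0; rewrite inE idx_in.
  + apply: H; first exact: idx_lt.
    by apply/set0Pn; exists j0; rewrite inE idx_in.
Qed.

Lemma F3_sets i j k l : i < k -> k <= j -> j < l ->
  [/\ blk i j :&: blk k l = blk k j, blk i j :\: blk k l = blk i k.-1,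
      blk k l :\: blk i j = blk j.+1 l & blk i j :|: blk k l = blk i l].
Proof.
move=> h1 h2 h3; split; apply/setP => y; rewrite !inE; case: (y \in X) => //=;
  apply/idP/idP; lia.
Qed.

Lemma linF3 i j k l : i < k -> k <= j -> j < l -> l < r ->
  common P (blk i j) -> common P (blk k l) ->
  [/\ common P (blk k j), common P (blk i k.-1), common P (blk j.+1 l) & common P (blk i l)].
Proof.
move=> h1 h2 h3 h4 c1 c2.
case: (F3_sets h1 h2 h3) => e1 e2 e3 e4.
have ij : i <= j by lia.
have jr : j < r by lia.
have kl : k <= l by lia.
have ne : blk i j :&: blk k l != set0 by rewrite blk_meet //; apply/andP; split; lia.
have n1 : ~~ (blk i j \subset blk k l) by rewrite blk_sub_iff //; apply/negP; lia.
have n2 : ~~ (blk k l \subset blk i j) by rewrite blk_sub_iff //; apply/negP; lia.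
split.
- by rewrite -e1; apply: commonI.
- by rewrite -e2; apply: commonD.
- by rewrite -e3; apply: commonD.
- by rewrite -e4; apply: commonU.
Qed.

Lemma linF4 i j : i < j -> j < r -> ~ (i = 0 /\ j = r.-1) -> common P (blk i j) ->
  exists k l, [/\ k <= l, l < r, common P (blk k l) &
     ((i < k /\ k <= j /\ j < l) \/ (k < i /\ i <= l /\ l < j))].
Proof.
move=> ij jr nf cB.
have ir : i < r by lia.
have ij' : i <= j by lia.
have nsB : ~~ strong P (blk i j).
  apply/negP => sB.
  have pc : c i \proper blk i j.
    rewrite properE -(blk_single ir) !blk_sub_iff //; apply/andP; split.
      apply/andP; split; lia.
    by apply/negP; lia.
  case: (childP (c_child ir)) => _ _ _ /(_ _ sB pc).
  have rr : r.-1 < r by move: r_ge3; lia.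
  rewrite -{1}blk_full blk_sub_iff //.
  by move=> H; apply: nf; lia.
move: nsB; rewrite /strong cB /= => /forallPn [T]; rewrite negb_imply negbK => /andP [cT ov].
case: (overlap_facts ov) => meet n1 n2.
have BX := blk_subX i j.
have TX : T \subset X.
  have neX : X :&: T != set0.
    case/set0Pn: meet => y; rewrite inE => /andP [yB yT].
    by apply/set0Pn; exists y; rewrite inE yT (subsetP BX).
  case: (laminar sX cT neX) => // XT.
  by move: n1; rewrite (subset_trans BX XT).
have Hc : forall m, m < r -> c m :&: T != set0 -> c m \subset T.
  move=> m mr ne; case: (laminar (c_strong mr) cT ne) => // Tc.
  exfalso.
  have [im|im] := boolP ((i <= m) && (m <= j)).
  - move: n2; rewrite (subset_trans Tc) //.
    by rewrite -(blk_single mr) blk_sub_iff //; lia.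
  - have : blk m m :&: blk i j != set0.
      case/set0Pn: meet => y; rewrite inE => /andP [yB yT].
      by apply/set0Pn; exists y; rewrite inE yB blk_single // (subsetP Tc).
    by rewrite blk_meet //; lia.
case: (shape cT TX Hc) => k [l [kl lr eT]].
move: meet n1 n2; rewrite eT blk_meet // !blk_sub_iff // => meet n1 n2.
exists k, l; split => //; first by rewrite -eT.
lia.
Qed.

Lemma linF5 : exists i j, [/\ i < j, j < r, ~ (i = 0 /\ j = r.-1) & common P (blk i j)].
Proof.
case/existsP: some_union => D' /and4P [sD h2 h3 cU].
set U := \bigcup_(Y in D') Y in cU.
have chD : forall Y, Y \in D' -> is_child P X Y.
  by move=> Y YD; move: (subsetP sD Y YD); rewrite inE.
have UX : U \subset X.
  by apply/bigcupsP => Y /chD /child_sub.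
have Hc : forall m, m < r -> c m :&: U != set0 -> c m \subset U.
  move=> m mr /set0Pn [y]; rewrite inE => /andP [yc /bigcupP [Y YD yY]].
  have -> : c m = Y.
    apply: (child_disj (c_child mr) (chD Y YD)).
    by apply/set0Pn; exists y; rewrite inE yc yY.
  exact: bigcup_sup.
case: (shape cU UX Hc) => k [l [kl lr eU]].
exists k, l; split => //; last by rewrite -eU.
- rewrite ltn_neqAle kl andbT; apply/negP => /eqP ekl.
  have : D' \subset [set c k].
    apply/subsetP => Y YD; rewrite inE; apply/eqP.
    have kr : k < r by rewrite ekl.
    apply: (child_disj (chD Y YD) (c_child kr)).
    case/set0Pn: (child_ne (chD Y YD)) => y yY.
    apply/set0Pn; exists y; rewrite inE yY /=.
    have : y \in U by apply: (subsetP (bigcup_sup _ YD)).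
    by rewrite eU -ekl blk_single.
  move/subset_leq_card; rewrite cards1 => h.
  by move: (leq_trans h2 h); rewrite ltnn.
- move=> [ek el].
  have : children P X \subset D'.
    apply/subsetP => Y; rewrite inE => cY.
    case/set0Pn: (child_ne cY) => y yY.
    have : y \in U by rewrite eU ek el blk_full (subsetP (child_sub cY)).
    case/bigcupP => Y' Y'D yY'.
    have -> : Y = Y'.
      apply: (child_disj cY (chD Y' Y'D)).
      by apply/set0Pn; exists y; rewrite inE yY yY'.
    done.
  move/subset_leq_card => h.
  by move: (leq_ltn_trans h h3); rewrite ltnn.
Qed.

Theorem linear i j : i <= j -> j < r -> common P (blk i j).
Proof.
apply: (@abs_all r (fun i j => common P (blk i j))).
- by move=> m mr; rewrite blk_single //; apply: strong_common; apply: c_strong.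
- by rewrite blk_full; apply: strong_common; apply: sX.
- exact: linF3.
- exact: linF4.
- exact: linF5.
Qed.

Lemma blk_diff_lo lo hi : lo < r -> blk lo hi :\: c lo = blk lo.+1 hi.
Proof.
move=> lr; rewrite -(blk_single lr); apply/setP => y; rewrite !inE.
case: (y \in X) => //=; apply/idP/idP; lia.
Qed.

Lemma blk_diff_hi lo hi : 0 < hi -> hi < r -> blk lo hi :\: c hi = blk lo hi.-1.
Proof.
move=> h0 hr; rewrite -(blk_single hr); apply/setP => y; rewrite !inE.
case: (y \in X) => //=; apply/idP/idP; lia.
Qed.

Lemma step_up bb A B : common P A -> nested P bb (A :\: B) -> small bb B -> B :&: A != set0 ->
  nested P bb A.
Proof.
move=> cA nD sB ne.
apply: (nestedS cA (nested_common nD) _ _ nD).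
- rewrite properE subsetDl /=; apply/negP => /subsetP H.
  case/set0Pn: ne => y; rewrite inE => /andP [yB yA].
  by move: (H y yA); rewrite inE yB.
- move: sB; rewrite /small => sB.
  have h1 : #|A| <= #|(A :\: B) :|: B|.
    apply: subset_leq_card; apply/subsetP => y yA; rewrite !inE yA.
    by case: (y \in B).
  rewrite cardsU in h1.
  have h2 := subset_leq_card (subsetIr (A :\: B) B).
  lia.
Qed.

Lemma step_down bb A B J : common P (A :\: B) -> common P J -> J \proper A ->
  #|A| <= #|J| + bb -> nested P bb J -> J :&: B = set0 -> B \subset A ->
  small bb B /\ nested P bb (A :\: B).
Proof.
move=> cD cJ pJ hs nJ dis BA.
have JA := proper_sub pJ.
have JD : J \subset A :\: B.
  apply/subsetP => y yJ; rewrite inE (subsetP JA _ yJ) andbT; apply/negP => yB.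
  by move/setP: dis => /(_ y); rewrite !inE yJ yB.
split.
- rewrite /small.
  have h1 : #|B :|: J| <= #|A| by apply: subset_leq_card; rewrite subUset BA.
  have := cardsU B J; rewrite setIC dis cards0; lia.
- have [eJ|nJD] := eqVneq J (A :\: B); first by rewrite -eJ.
  apply: (nestedS cD cJ _ _ nJ); first by rewrite properEneq nJD.
  have : #|A :\: B| <= #|A| by apply: subset_leq_card; apply: subsetDl.
  lia.
Qed.

Theorem node_main bb lo hi : lo < hi -> hi < r ->
  (nested P bb (blk lo hi) <->
   ((small bb (c lo) /\ nested P bb (blk lo hi :\: c lo)) \/
    (small bb (c hi) /\ nested P bb (blk lo hi :\: c hi)))).
Proof.
move=> lh hr.
have lr : lo < r by lia.
have lh' : lo <= hi by lia.
have cB : common P (blk lo hi) by apply: linear.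
have clo : c lo \subset blk lo hi by rewrite -(blk_single lr) blk_sub_iff //; apply/andP; split; lia.
have chi : c hi \subset blk lo hi by rewrite -(blk_single hr) blk_sub_iff //; apply/andP; split; lia.
have ne_lo : c lo :&: blk lo hi != set0.
  by rewrite (setIidPl clo); apply: c_ne.
have ne_hi : c hi :&: blk lo hi != set0.
  by rewrite (setIidPl chi); apply: c_ne.
have dis : c lo :&: c hi = set0.
  have H := blk_meet (leqnn lo) lr (leqnn hi) hr.
  rewrite !blk_single // in H.
  apply/eqP/negPn; rewrite H; apply/negP; lia.
split.
- move Eb: (blk lo hi) => B HB; case: HB Eb => [I' cI e1 eI|I' J cI cJ pJ hs nJ eI]; subst I'.
  + exfalso.
    case/set0Pn: (c_ne lr) => y yC; case/set0Pn: (c_ne hr) => z zC.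
    have yz : y != z by apply/eqP => e; move: (c_lt lh hr yC zC); rewrite e ltnn.
    have : [set y; z] \subset blk lo hi.
      by rewrite subUset !sub1set (subsetP clo) ?(subsetP chi).
    by move/subset_leq_card; rewrite cards2 yz e1.
  + have [d1|d1] := eqVneq (J :&: c lo) set0.
      left; apply: (step_down _ cJ pJ hs nJ d1 clo).
      by rewrite blk_diff_lo //; apply: linear; lia.
    have [d2|d2] := eqVneq (J :&: c hi) set0.
      right; apply: (step_down _ cJ pJ hs nJ d2 chi).
      by rewrite blk_diff_hi //; try lia; apply: linear; lia.
    exfalso.
    have sub1 : c lo \subset J.
      case: (laminar (c_strong lr) cJ ltac:(by rewrite setIC)) => // Jc.
      case/set0Pn: d2 => y; rewrite inE => /andP [yJ yh].
      by move/setP: dis => /(_ y); rewrite !inE yh (subsetP Jc _ yJ).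
    have sub2 : c hi \subset J.
      case: (laminar (c_strong hr) cJ ltac:(by rewrite setIC)) => // Jc.
      case/set0Pn: d1 => y; rewrite inE => /andP [yJ yl].
      by move/setP: dis => /(_ y); rewrite !inE yl (subsetP Jc _ yJ).
    have := blk_fill cJ lh' hr sub1 sub2.
    by move: pJ; rewrite properE => /andP [_ /negP].
- case=> [[s1 n1]|[s1 n1]]; apply: step_up; eauto.
Qed.


Lemma seg_facts a m k : k = size (take m (drop a cs)) -> 0 < k ->
  [/\ a + k <= r,
      forall t, t < k -> nth set0 (take m (drop a cs)) t = c (a + t) &
      \bigcup_(Y in [set Y in take m (drop a cs)]) Y = blk a (a + k.-1)].
Proof.
move=> ek0 k0'.
have ek : k = minn m (r - a) by rewrite ek0 size_take_min size_drop.
have ar : a + k <= r.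
  move: k0'; rewrite ek => h; lia.
have nt : forall t, t < k -> nth set0 (take m (drop a cs)) t = c (a + t).
  move=> t tk; rewrite nth_take; last by move: tk; rewrite ek; lia.
  by rewrite nth_drop.
split => //.
apply/setP => y; apply/bigcupP/idP.
- case=> Y; rewrite inE => /nthP => /(_ set0) [t tk <-]; rewrite -ek0 in tk.
  rewrite (nt t tk) => yc.
  have tr : a + t < r by apply: leq_trans ar; rewrite ltn_add2l.
  rewrite (c_blk _ _ tr yc); apply/andP; split; first by apply: leq_addr.
  lia.
- rewrite mem_blk => /and3P [yX h1 h2].
  have tk : idx y - a < k by lia.
  exists (nth set0 (take m (drop a cs)) (idx y - a)).
    by rewrite inE; apply: mem_nth; rewrite -ek0.
  by rewrite (nt _ tk) subnKC //; apply: idx_in.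
Qed.

End Node.

Lemma lemma3_aux (b : nat) (I : {set 'I_n}) (xs : seq {set 'I_n}) :
  Qinterval P I -> is_domain P I [set Y in xs] -> sorted (@adj n) xs ->
  (nested P b I <->
     ((small b (head set0 xs) /\ nested P b (I :\: head set0 xs)) \/
      (small b (last set0 xs) /\ nested P b (I :\: last set0 xs)))).
Proof.
move=> /andP [cI nPI] dom so.
case: dom => [[sI eD]|[nsI [X [qX [cs [scs [pcs [a [m [eD eU]]]]]]]]]].
- have qI : Qnode P I.
    by move: nPI; rewrite /Pinterval /Pnode sI /= negbK => h; rewrite /Qnode sI h.
  have hmem : forall Y, (Y \in xs) = is_child P I Y.
    by move=> Y; move/setP: eD => /(_ Y); rewrite !inE.
  have r3 := r_ge3 qI so hmem.
  have h1 : 0 < (size xs).-1 by move: r3; lia.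
  have h2 : (size xs).-1 < size xs by move: r3; lia.
  have := node_main qI so hmem b h1 h2.
  by rewrite blk_full // nth0 nth_last.
- have hmem : forall Y, (Y \in cs) = is_child P X Y.
    by move=> Y; rewrite (perm_mem pcs) mem_enum inE.
  set s := take m (drop a cs) in eD.
  have ss : sorted Rset s.
    apply: (subseq_sorted R_trans _ (sorted_adj_R scs)).
    exact: subseq_trans (take_subseq _ _) (drop_subseq _ _).
  have exs : xs = s.
    apply: (irr_sorted_eq R_trans R_irr (sorted_adj_R so) ss) => Y.
    by move/setP: eD => /(_ Y); rewrite !inE.
  rewrite exs in eU *.
  have k0 : 0 < size s.
    rewrite lt0n; apply/negP => /nilP es.
    move: (common_ne cI); rewrite -eU es; apply/negP; rewrite negbK.
    by apply/eqP/setP => y; rewrite inE; apply/negP => /bigcupP [Y]; rewrite inE.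
  case: (seg_facts qX scs hmem (erefl _) k0) => ar nt eB.
  rewrite eB in eU.
  have k1 : 1 < size s.
    rewrite ltn_neqAle k0 andbT; apply/negP => /eqP e1.
    move: nsI; rewrite -eU -e1 /= addn0 blk_single //; last by move: ar; rewrite -e1; lia.
    by rewrite (c_strong hmem) //; move: ar; rewrite -e1; lia.
  rewrite -eU -nth0 -nth_last (nt 0 k0) addn0 (nt (size s).-1) ?prednK //.
  move: k1 ar; rewrite /s => k1 ar.
  by apply: node_main => //; lia.
Qed.

End Basic.

Theorem lemma3 (n : nat) (hn : 0 < n) (K : nat) (hK : 0 < K)
  (P : 'I_K -> {perm 'I_n}) (hP1 : forall k : 'I_K, val k = 0 -> P k = 1%g)
  (b : nat) (hb : 0 < b) (I : {set 'I_n}) (xs : seq {set 'I_n}) :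
  Qinterval P I ->
  is_domain P I [set Y in xs] ->
  sorted (@adj n) xs ->
  (nested P b I <->
     ((small b (head set0 xs) /\ nested P b (I :\: head set0 xs)) \/
      (small b (last set0 xs) /\ nested P b (I :\: last set0 xs)))).
Proof.
move=> qI dom so; exact: (lemma3_aux hK hP1 b qI dom so).
Qed.
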